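(* With the notation of the context, for all admissible fixed frequencies, $$|S_{kk_1}|\lesssim (N_2\wedge N_3)^{2-\alpha}\langle k_1-k\rangle^{-1}+1,\qquad |S_{kk_3}|\lesssim (N_1\wedge N_2)^{2-\alpha}\langle k-k_3\rangle^{-1}+1,$$ $$|S_{k_1k_2}|\lesssim N_3^{2-\alpha}\langle k_1-k_2\rangle^{-1}+1,\qquad |S_{k_2k_3}|\lesssim N_1^{2-\alpha}\langle k_2-k_3\rangle^{-1}+1.$$
   Context: Fix $\alpha\in(1,2)$, dyadic numbers $1\le N_1,N_2,N_3\le N$, a real number $m$ and a constant $C_0>0$. Let $S$ be the set of $(k,k_1,k_2,k_3)\in\mathbb Z^4$ with $k=k_1-k_2+k_3$, $k_2\notin\{k_1,k_3\}$, $\big||k_1|^\alpha-|k_2|^\alpha+|k_3|^\alpha-|k|^\alpha-m\big|\le C_0$, $|k|\le N$ and $|k_j|\le N_j$ for $j=1,2,3$. When some of the variables are fixed, $S$ with those variables as subscripts denotes the set of the remaining variables for which the quadruple lies in $S$ (e.g. $S_{kk_1}=\{(k_2,k_3):(k,k_1,k_2,k_3)\in S\}$, $S_k=\{(k_1,k_2,k_3):(k,k_1,k_2,k_3)\in S\}$). $|A|$ is the cardinality of $A$, $\langle x\rangle=(1+|x|^2)^{1/2}$, $a\wedge b=\min(a,b)$, $a\vee b=\max(a,b)$. $A\lesssim B$ means $A\le CB$ with $C$ depending only on $\alpha$ and $C_0$ (uniform in $m$, the $N$'s and the fixed frequencies). *)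

(* Defs.v *)
From HB Require Import structures.
From mathcomp Require Import all_boot all_order all_algebra.
From mathcomp Require Import all_classical all_reals all_analysis.
Set Implicit Arguments. Unset Strict Implicit. Unset Printing Implicit Defensive.
Import Order.TTheory GRing.Theory Num.Theory.
Local Open Scope ring_scope.

Definition dyadic (N : nat) : Prop := exists j : nat, N = (2 ^ j)%N.

(* |k|^alpha, with powR (0 `^ alpha = 0 for alpha <> 0) *)
Definition pw (R : realType) (alpha : R) (k : int) : R :=
  ((`|k|%N)%:R : R) `^ alpha.

Definition jbr (R : realType) (x : int) : R := Num.sqrt (1 + (x%:~R : R) ^+ 2).

Definition inS (R : realType) (alpha C0 m : R) (N N1 N2 N3 : nat)
    (k k1 k2 k3 : int) : bool :=
  [&& k == k1 - k2 + k3, k2 != k1, k2 != k3,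
      `|pw alpha k1 - pw alpha k2 + pw alpha k3 - pw alpha k - m| <= C0,
      (`|k| <= N%:Z)%R, (`|k1| <= N1%:Z)%R, (`|k2| <= N2%:Z)%R
      & (`|k3| <= N3%:Z)%R].

Definition box (M : nat) : seq int :=
  [seq (i%:Z - M%:Z)%R | i <- iota 0 (2 * M).+1].

(* cardinality of {(a,b) : P a b} where P forces |a| <= M, |b| <= M'
   (so counting over the box counts the whole set) *)
Definition card2 (P : int -> int -> bool) (M M' : nat) : nat :=
  count (fun p : int * int => P p.1 p.2) [seq (a, b) | a <- box M, b <- box M'].

Definition card_S_kk1 (R : realType) (alpha C0 m : R) (N N1 N2 N3 : nat) (k k1 : int) :=
  card2 (fun k2 k3 => inS alpha C0 m N N1 N2 N3 k k1 k2 k3) N2 N3.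
Definition card_S_kk3 (R : realType) (alpha C0 m : R) (N N1 N2 N3 : nat) (k k3 : int) :=
  card2 (fun k1 k2 => inS alpha C0 m N N1 N2 N3 k k1 k2 k3) N1 N2.
Definition card_S_k1k2 (R : realType) (alpha C0 m : R) (N N1 N2 N3 : nat) (k1 k2 : int) :=
  card2 (fun k k3 => inS alpha C0 m N N1 N2 N3 k k1 k2 k3) N N3.
Definition card_S_k2k3 (R : realType) (alpha C0 m : R) (N N1 N2 N3 : nat) (k2 k3 : int) :=
  card2 (fun k k1 => inS alpha C0 m N N1 N2 N3 k k1 k2 k3) N N1.

(* Main.v *)
Require Import Defs.
From HB Require Import structures.
From mathcomp Require Import all_boot all_order all_algebra.
From mathcomp Require Import all_classical all_reals all_analysis.
From mathcomp.algebra_tactics Require Import ring lra.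
From mathcomp.zify Require Import zify.
Import Order.TTheory GRing.Theory Num.Theory.
Local Open Scope ring_scope.
Lemma mvt_pow (R : realType) (p a b : R) : 0 < a -> a < b ->
  exists2 c, a < c < b & b `^ p - a `^ p = p * c `^ (p-1) * (b - a).
Proof.
move=> a0 ab.
have H1 : forall x, x \in `]a, b[ -> is_derive x 1 (fun y : R => y `^ p) (p * x `^ (p-1)).
  move=> x; rewrite in_itv /= => /andP[ax _]; apply: is_derive1_powR.
  exact: lt_trans ax.
case: (MVT ab H1) => [|c cab ->].
  apply: derivable_within_continuous => x; rewrite in_itv /= => /andP[ax _].
  apply: derivable_powR; rewrite in_itv /= andbT; exact: lt_le_trans ax.
by move: cab; rewrite in_itv /= => cab; exists c.
Qed.

Lemma tan_pos (R : realType) (al a b : R) : 1 < al -> 0 <= a -> a <= b ->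
  al * a `^ (al - 1) * (b - a) <= b `^ al - a `^ al <= al * b `^ (al - 1) * (b - a).
Proof.
move=> al1 a0 ab.
have al0 : 0 < al by lra.
have [->|ab'] := eqVneq a b; first by rewrite !subrr !mulr0 lexx.
have {ab'} ab : a < b by rewrite lt_neqAle ab' ab.
have [a0'|a0'] := eqVneq a 0.
  rewrite a0' !powR0 ?gt_eqF ?subr_gt0 // mulr0 mul0r !subr0.
  have hb : b `^ al = b * b `^ (al-1) by rewrite mulr_powRB1 //; lra.
  rewrite hb.
  have := powR_ge0 b (al - 1); have := powR_ge0 b al.
  move=> h1 h2; have b0 : 0 <= b by lra.
  apply/andP; split; nra.
have {a0'} a0 : 0 < a by rewrite lt_neqAle eq_sym a0' a0.
have [c /andP[ac cb] ->] := @mvt_pow R al a b a0 ab.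
have e0 : 0 <= al - 1 by lra.
have h1 : a `^ (al - 1) <= c `^ (al - 1).
  by apply: ge0_ler_powR => //; rewrite ?nnegrE; lra.
have h2 : c `^ (al - 1) <= b `^ (al - 1).
  by apply: ge0_ler_powR => //; rewrite ?nnegrE; lra.
have h3 : 0 <= b - a by lra.
have h4 : 0 <= (c `^ (al - 1) - a `^ (al - 1)) * (b - a) by apply: mulr_ge0; lra.
have h5 : 0 <= (b `^ (al - 1) - c `^ (al - 1)) * (b - a) by apply: mulr_ge0; lra.
apply/andP; split; nra.
Qed.

Definition Fp {R : realType} (al t : R) := `|t| `^ al.
Definition Gp {R : realType} (be t : R) := if 0 <= t then t `^ be else - ((-t) `^ be).

Lemma GpE_pos (R : realType) (be t : R) : 0 <= t -> Gp be t = t `^ be.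
Proof. by rewrite /Gp => ->. Qed.

Lemma GpE_neg (R : realType) (be t : R) : be != 0 -> t <= 0 -> Gp be t = - ((-t) `^ be).
Proof.
move=> be0 t0; rewrite /Gp; case: ifP => // t0'.
have -> : t = 0 by apply/eqP; rewrite eq_le t0 t0'.
by rewrite oppr0 powR0 // oppr0.
Qed.

Lemma tan_all (R : realType) (al a b : R) : 1 < al -> a <= b ->
  al * Gp (al - 1) a * (b - a) <= Fp al b - Fp al a <= al * Gp (al - 1) b * (b - a).
Proof.
move=> al1 ab; rewrite /Fp.
have be0 : al - 1 != 0 by rewrite subr_eq0; apply/eqP => h; rewrite h ltxx in al1.
have al0 : al != 0 by rewrite gt_eqF //; lra.
have [a0|a0] := leP 0 a.
  rewrite !ger0_norm ?GpE_pos //; try lra.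
  exact: tan_pos.
have [b0|b0] := leP b 0.
  rewrite !ler0_norm ?GpE_neg //; try lra.
  have := @tan_pos R al (-b) (-a) al1 ltac:(lra) ltac:(lra).
  move=> /andP[h1 h2]; apply/andP; split; nra.
rewrite (ltr0_norm a0) (gtr0_norm b0) GpE_neg ?GpE_pos //; try lra.
have := @tan_pos R al 0 b al1 (lexx _) ltac:(lra).
have := @tan_pos R al 0 (-a) al1 (lexx _) ltac:(lra).
rewrite !powR0 // !mulr0 !mul0r !subr0.
move=> /andP[h1 h2] /andP[h3 h4].
have h5 := powR_ge0 (-a) (al - 1); have h6 := powR_ge0 b (al - 1).
have h7 : 0 <= al * (-a) `^ (al - 1) * b by apply: mulr_ge0; [apply: mulr_ge0|]; lra.
have h8 : 0 <= al * b `^ (al - 1) * (-a) by apply: mulr_ge0; [apply: mulr_ge0|]; lra.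
apply/andP; split; nra.
Qed.

Lemma P0 (R : realType) (be t L : R) : be < 1 -> 0 < t -> t <= L ->
  L `^ (be - 1) <= t `^ (be - 1).
Proof.
move=> be1 t0 tL.
have -> : be - 1 = - (1 - be) by ring.
rewrite !powRN lef_pV2 ?posrE ?powR_gt0 //; last by lra.
apply: ge0_ler_powR; rewrite ?nnegrE; lra.
Qed.

Lemma P1 (R : realType) (be t L : R) : 0 < be < 1 -> 0 <= t -> t <= L ->
  t * L `^ (be - 1) <= t `^ be.
Proof.
move=> /andP[be0 be1] t0 tL.
have [->|t0'] := eqVneq t 0; first by rewrite mul0r powR_ge0.
have tp : 0 < t by rewrite lt_neqAle eq_sym t0' t0.
rewrite -(mulr_powRB1 (x := t) t0 be0).
by rewrite ler_wpM2l // P0.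
Qed.

Lemma P3 (R : realType) (be a b L : R) : 0 < be < 1 -> 0 <= a -> a <= b -> b <= L ->
  be * L `^ (be - 1) * (b - a) <= b `^ be - a `^ be.
Proof.
move=> /andP[be0 be1] a0 ab bL.
have hL := powR_ge0 L (be - 1).
have [->|ab'] := eqVneq a b; first by rewrite !subrr mulr0.
have {ab'} ab : a < b by rewrite lt_neqAle ab' ab.
have [a0'|a0'] := eqVneq a 0.
  rewrite a0' powR0 ?gt_eqF // !subr0.
  have := @P1 R be b L ltac:(lra) ltac:(lra) bL.
  have : 0 <= (1 - be) * (L `^ (be - 1) * b) by apply: mulr_ge0; [lra|apply: mulr_ge0; lra].
  nra.
have {a0'} a0 : 0 < a by rewrite lt_neqAle eq_sym a0' a0.
have [c /andP[ac cb] ->] := @mvt_pow R be a b a0 ab.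
have h := @P0 R be c L be1 ltac:(lra) ltac:(lra).
have : 0 <= be * (b - a) by apply: mulr_ge0; lra.
nra.
Qed.

Lemma Ggap (R : realType) (be a b L : R) : 0 < be < 1 -> a <= b ->
  `|a| <= L -> `|b| <= L ->
  be * L `^ (be - 1) * (b - a) <= Gp be b - Gp be a.
Proof.
move=> /andP[be0 be1] ab aL bL.
have bn0 : be != 0 by rewrite gt_eqF.
have hL := powR_ge0 L (be - 1).
have [a0|a0] := leP 0 a.
  rewrite !GpE_pos //; try lra.
  apply: P3; rewrite ?be0 ?be1 //; move: bL; rewrite ger0_norm //; lra.
have [b0|b0] := leP b 0.
  rewrite !GpE_neg //; try lra.
  have := @P3 R be (-b) (-a) L ltac:(lra) ltac:(lra) ltac:(lra) ltac:(move: aL; rewrite ltr0_norm //).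
  have -> : - a - - b = b - a by ring.
  lra.
rewrite (@GpE_neg R be a bn0 (ltW a0)) (@GpE_pos R be b (ltW b0)).
have h1 := @P1 R be b L ltac:(lra) ltac:(lra) ltac:(move: bL; rewrite gtr0_norm //).
have h2 := @P1 R be (-a) L ltac:(lra) ltac:(lra) ltac:(move: aL; rewrite ltr0_norm //).
have : 0 <= (1 - be) * (L `^ (be - 1) * (b - a)) by apply: mulr_ge0; [lra|apply: mulr_ge0; lra].
nra.
Qed.

Lemma Gmono (R : realType) (be a b : R) : 0 < be < 1 -> a <= b -> Gp be a <= Gp be b.
Proof.
move=> hbe ab.
have := @Ggap R be a b (`|a| + `|b|) hbe ab.
have := normr_ge0 a; have := normr_ge0 b.
have := powR_ge0 (`|a| + `|b|) (be - 1).
move=> h1 h2 h3 /(_ ltac:(lra) ltac:(lra)).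
have : 0 <= be * (`|a| + `|b|) `^ (be - 1) * (b - a).
  apply: mulr_ge0; [apply: mulr_ge0|]; lra.
lra.
Qed.

Lemma core (R : realType) (al C0 x y h A B : R) : 1 < al < 2 -> 1 <= h -> x <= y ->
  `|x| <= A -> `|y| <= A -> `|x + h| <= B -> `|y + h| <= B ->
  `|(Fp al (y + h) - Fp al y) - (Fp al (x + h) - Fp al x)| <= 2 * C0 ->
  al * (al - 1) * (Num.min A B + h) `^ (al - 2) * (y - x) * h <= 16 * C0.
Proof.
move=> /andP[al1 al2] h1 xy xA yA xB yB hg.
set be := al - 1.
have hbe : 0 < be < 1 by apply/andP; split; rewrite /be; lra.
have al0 : 0 < al by lra.
set L := Num.min A B + h.
have e2 : al - 2 = be - 1 by rewrite /be; ring.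
rewrite e2.
set Q := L `^ (be - 1).
have Q0 : 0 <= Q by apply: powR_ge0.
have hM2 : (Num.min A B = A /\ A <= B) \/ (Num.min A B = B /\ B <= A).
  by rewrite minEle; case: leP => hh; [left|right]; split => //; lra.
move: xA yA xB yB; rewrite !ler_norml => /andP[xA1 xA2] /andP[yA1 yA2] /andP[xB1 xB2] /andP[yB1 yB2].
have inL : forall p, ((x <= p <= x + h) || (p == y)) -> `|p| <= L.
  move=> p /orP[/andP[p1 p2]|/eqP->]; rewrite ler_norml /L;
  case: hM2 => [[-> ?]|[-> ?]]; apply/andP; split; lra.
have C00 : 0 <= C0 by have := le_trans (normr_ge0 _) hg; lra.
move: hg; rewrite ler_norml => /andP[_ hg].
pose g t := Fp al (t + h) - Fp al t.
have I1 : forall u v, u <= v -> al * (v - u) * (Gp be (u + h) - Gp be v) <= g v - g u.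
  move=> u v uv.
  have := @tan_all R al (u + h) (v + h) al1 ltac:(lra).
  have := @tan_all R al u v al1 uv.
  rewrite -/be /g.
  have -> : v + h - (u + h) = v - u by ring.
  move=> /andP[_ t1] /andP[t2 _]; nra.
have I2 : forall u v, u <= v -> al * h * (Gp be v - Gp be (u + h)) <= g v - g u.
  move=> u v uv.
  have := @tan_all R al v (v + h) al1 ltac:(lra).
  have := @tan_all R al u (u + h) al1 ltac:(lra).
  rewrite -/be /g.
  have -> : v + h - v = h by ring.
  have -> : u + h - u = h by ring.
  move=> /andP[_ t1] /andP[t2 _]; nra.
have hgxy : g y - g x <= 2 * C0 by rewrite /g.
have hQb : 0 <= al * be * Q by apply: mulr_ge0; [apply: mulr_ge0|]; lra.
have [c1|c1] := leP (y - x) (h / 2).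
  have gg := @Ggap R be y (x + h) L hbe ltac:(lra) (inL y ltac:(by rewrite eqxx orbT))
     (inL (x + h) ltac:(apply/orP; left; apply/andP; split; lra)).
  rewrite -/Q in gg.
  have := I1 x y xy.
  have : 0 <= al * (y - x) * (Gp be (x + h) - Gp be y - be * Q * (x + h - y)).
    apply: mulr_ge0; [apply: mulr_ge0|]; lra.
  have : 0 <= al * be * Q * (y - x) * (h / 2 - (y - x)).
    apply: mulr_ge0; [apply: mulr_ge0|]; try lra; apply: mulr_ge0; lra.
  nra.
have [c3|c3] := leP (2 * h) (y - x).
  have gg := @Ggap R be (x + h) y L hbe ltac:(lra)
     (inL (x + h) ltac:(apply/orP; left; apply/andP; split; lra))
     (inL y ltac:(by rewrite eqxx orbT)).
  rewrite -/Q in gg.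
  have := I2 x y xy.
  have : 0 <= al * h * (Gp be y - Gp be (x + h) - be * Q * (y - (x + h))).
    apply: mulr_ge0; [apply: mulr_ge0|]; lra.
  have : 0 <= al * be * Q * h * ((y - x) / 2 - h).
    apply: mulr_ge0; [apply: mulr_ge0|]; try lra.
  nra.
pose z := x + h / 2.
have gg := @Ggap R be z (x + h) L hbe ltac:(rewrite /z; lra)
     (inL z ltac:(apply/orP; left; apply/andP; split; rewrite /z; lra))
     (inL (x + h) ltac:(apply/orP; left; apply/andP; split; lra)).
  rewrite -/Q in gg.
have J1 := I1 x z ltac:(rewrite /z; lra).
have J2 : 0 <= g y - g z.
  have [c4|c4] := leP y (z + h).
    have := I1 z y ltac:(rewrite /z; lra).
    have := @Gmono R be y (z + h) hbe c4.
    move=> m1 m2; have : 0 <= al * (y - z) * (Gp be (z + h) - Gp be y).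
      apply: mulr_ge0; [apply: mulr_ge0|]; rewrite /z; lra.
    lra.
  have := I2 z y ltac:(rewrite /z; lra).
  have := @Gmono R be (z + h) y hbe ltac:(lra).
  move=> m1 m2; have : 0 <= al * h * (Gp be y - Gp be (z + h)).
    apply: mulr_ge0; [apply: mulr_ge0|]; lra.
  lra.
have ez : z - x = h / 2 by rewrite /z; lra.
have ez2 : x + h - z = h / 2 by rewrite /z; lra.
rewrite ez in J1; rewrite ez2 in gg.
have : 0 <= al * (h / 2) * (Gp be (x + h) - Gp be z - be * Q * (h / 2)).
  apply: mulr_ge0; [apply: mulr_ge0|]; lra.
have : 0 <= al * be * Q * h * (2 * h - (y - x)).
  apply: mulr_ge0; [apply: mulr_ge0|]; lra.
nra.
Qed.

Lemma core2 (R : realType) (al C0 x y h A B : R) : 1 < al < 2 -> 1 <= `|h| ->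
  `|x| <= A -> `|y| <= A -> `|x + h| <= B -> `|y + h| <= B ->
  `|(Fp al (y + h) - Fp al y) - (Fp al (x + h) - Fp al x)| <= 2 * C0 ->
  al * (al - 1) * (Num.min A B + `|h|) `^ (al - 2) * `|y - x| * `|h| <= 16 * C0.
Proof.
move=> hal hh.
wlog xy : x y / x <= y.
  move=> W; have [xy|yx] := leP x y; first exact: W.
  move=> xA yA xB yB hg; rewrite distrC.
  apply: W => //; first by apply: ltW.
  by rewrite distrC.
move=> xA yA xB yB hg.
rewrite (ger0_norm (x := y - x)); last by lra.
have [h0|h0] := leP 0 h.
  rewrite ger0_norm // in hh *.
  exact: core.
rewrite ltr0_norm // in hh *.
have := @core R al C0 (x + h) (y + h) (- h) B A hal hh ltac:(lra).
rewrite !addrK minC.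
have -> : y + h - (x + h) = y - x by ring.
apply => //.
by rewrite -normrN; move: hg; congr (_ <= _); congr (`|_|); ring.
Qed.

Lemma bound_pow (R : realType) (al M H : R) : 1 < al < 2 -> 0 <= M -> 1 <= H ->
  (M + H) `^ (2 - al) <= 2 * M `^ (2 - al) + 2 * H.
Proof.
move=> /andP[al1 al2] M0 H1.
have r0 : 0 <= 2 - al by lra.
have r1 : 2 - al <= 1 by lra.
have h2 : (2:R) `^ (2 - al) <= 2 by apply: ler1_powR; lra.
have hM := powR_ge0 M (2 - al).
have [MH|HM] := leP M H.
  have e1 : (M + H) `^ (2 - al) <= (2 * H) `^ (2 - al).
    by apply: ge0_ler_powR; rewrite ?nnegrE; lra.
  rewrite powRM in e1; try lra.
  have e2 : H `^ (2 - al) <= H by apply: ler1_powR.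
  have := powR_ge0 H (2 - al). have := powR_ge0 2 (2 - al).
  nra.
have e1 : (M + H) `^ (2 - al) <= (2 * M) `^ (2 - al).
  by apply: ge0_ler_powR; rewrite ?nnegrE; lra.
rewrite powRM in e1; try lra.
have := powR_ge0 2 (2 - al).
nra.
Qed.

Lemma jbr_le (R : realType) (h : int) : h != 0 ->
  0 < jbr R h /\ jbr R h <= 2 * `|h%:~R : R|.
Proof.
move=> h0; rewrite /jbr; split.
  by rewrite sqrtr_gt0; have := sqr_ge0 (h%:~R : R); lra.
have H1 : 1 <= `|h%:~R : R|.
  by apply: norm_intr_ge1; rewrite ?intr_int // intr_eq0.
rewrite -[X in _ <= X]ger0_norm; last by lra.
rewrite -sqrtr_sqr; apply: ler_wsqrtr.
rewrite -[(h%:~R : R) ^+ 2]real_normK ?num_real //.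
nra.
Qed.

Lemma pair_bound (R : realType) (al C0 x y A B : R) (h : int) : 1 < al < 2 -> h != 0 ->
  `|x| <= A -> `|y| <= A -> `|x + h%:~R| <= B -> `|y + h%:~R| <= B ->
  `|(Fp al (y + h%:~R) - Fp al y) - (Fp al (x + h%:~R) - Fp al x)| <= 2 * C0 ->
  `|y - x| <= (64 * C0 / (al * (al - 1))) * ((Num.min A B) `^ (2 - al) / jbr R h + 1).
Proof.
move=> hal h0 xA yA xB yB hg.
have C00 : 0 <= C0 by have := le_trans (normr_ge0 _) hg; lra.
have H1 : 1 <= `|h%:~R : R|.
  by apply: norm_intr_ge1; rewrite ?intr_int // intr_eq0.
have [J0 J2] := jbr_le R h h0.
have := @core2 R al C0 x y (h%:~R) A B hal H1 xA yA xB yB hg.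
set H := `|h%:~R : R| in H1 J2 *. set M := Num.min A B. set J := jbr R h in J0 J2 *. set d := `|y - x|.
have M0 : 0 <= M.
  have : M = A \/ M = B by rewrite /M minEle; case: ifP; [left|right].
  have := normr_ge0 x; have := normr_ge0 (x + h%:~R); lra.
have d0 : 0 <= d by apply: normr_ge0.
move: hal => /andP[al1 al2].
have hb := @bound_pow R al M H ltac:(by rewrite al1 al2) M0 H1.
set P := (M + H) `^ (2 - al) in hb *.
have P0 : 0 < P by apply: powR_gt0; lra.
have -> : al - 2 = - (2 - al) by ring.
rewrite powRN -/P => hc.
set K := 64 * C0 / (al * (al - 1)).
have ab0 : 0 < al * (al - 1) by apply: mulr_gt0; lra.
have hK : K * (al * (al - 1)) = 64 * C0 by rewrite /K mulfVK // gt_eqF.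
have hdH : al * (al - 1) * (d * H) <= 16 * C0 * P.
  have e : al * (al - 1) * P^-1 * d * H * P = al * (al - 1) * (d * H).
    by field; rewrite gt_eqF.
  rewrite -e; apply: ler_wpM2r; lra.
set Mr := M `^ (2 - al) in hb *.
have Mr0 : 0 <= Mr by apply: powR_ge0.
have K0 : 0 <= K by rewrite /K; apply: divr_ge0; lra.
have s1 : al * (al - 1) * (d * H) <= al * (al - 1) * (K / 2 * (Mr + H)).
  apply: (le_trans hdH).
  have -> : al * (al - 1) * (K / 2 * (Mr + H)) = K * (al * (al - 1)) / 2 * (Mr + H) by ring.
  rewrite hK.
  have : 0 <= C0 * (2 * Mr + 2 * H - P) by apply: mulr_ge0; lra.
  lra.
rewrite ler_pM2l // in s1.
have iJ0 : 0 < J^-1 by rewrite invr_gt0.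
have ht : 1 <= 2 * (H * J^-1).
  have : J * J^-1 <= 2 * H * J^-1 by apply: ler_wpM2r; lra.
  rewrite mulfV ?gt_eqF //; lra.
have hint1 : 0 <= K * Mr * (2 * (H * J^-1) - 1) by apply: mulr_ge0; [apply: mulr_ge0|]; lra.
have hint2 : 0 <= K * H by apply: mulr_ge0; lra.
have H0 : 0 < H by lra.
have : 0 <= H * (K * (Mr / J + 1) - d) by nra.
rewrite pmulr_rge0 //; lra.
Qed.


Lemma box_uniq (M : nat) : uniq (box M).
Proof.
rewrite /box map_inj_uniq ?iota_uniq // => i j /addIr.
by case.
Qed.

Lemma count_int (P : int -> int -> bool) (A B : nat) (h : int) (n : nat) :
  (forall a b : int, P a b -> b = a + h) ->
  (forall a b a' b' : int, P a b -> P a' b' -> (`|a' - a| <= n%:Z)%R) ->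
  (Defs.card2 P A B <= (2 * n).+1)%N.
Proof.
move=> Hb Hd; rewrite /Defs.card2 -size_filter.
set l := seq.filter _ _.
have ul : uniq l.
  apply: filter_uniq; apply: allpairs_uniq; rewrite ?box_uniq //.
  by move=> [a b] [a' b'] _ _ /= [-> ->].
case El : l => [|p0 l'] //.
have p0l : p0 \in l by rewrite El mem_head.
rewrite -El -(size_map fst).
have Pp : forall p, p \in l -> P p.1 p.2 by move=> p; rewrite mem_filter => /andP[].
apply: (@leq_trans (size [seq p0.1 - n%:Z + i%:Z | i <- iota 0 (2 * n).+1])).
  apply: uniq_leq_size.
    rewrite map_inj_in_uniq // => p q pl ql e.
    move: (Hb _ _ (Pp p pl)) (Hb _ _ (Pp q ql)); case: p q pl ql e => [a b] [a' b'] /= _ _ -> -> ->.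
    done.
  move=> z /mapP [p pl ->].
  have := Hd _ _ _ _ (Pp p0 p0l) (Pp p pl).
  move: (p.1) (p0.1) => u v huv.
  move: huv; rewrite ler_norml => /andP[h1 h2].
  have e : ((absz (u - v + n%:Z))%:Z = u - v + n%:Z)%R.
    by rewrite gez0_abs //; lia.
  apply/mapP; exists (absz (u - v + n%:Z)).
    rewrite mem_iota /= add0n -ltz_nat e; lia.
  rewrite e; lia.
by rewrite size_map size_iota.
Qed.

Lemma count_real (R : realType) (P : int -> int -> bool) (A B : nat) (h : int) (D : R) :
  0 <= D ->
  (forall a b : int, P a b -> b = a + h) ->
  (forall a b a' b' : int, P a b -> P a' b' -> `|a'%:~R - a%:~R : R| <= D) ->
  (Defs.card2 P A B)%:R <= 2 * D + 1.
Proof.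
move=> D0 Hb Hd.
have f0 : 0 <= Num.floor D by rewrite floor_ge0.
have hn : (absz (Num.floor D))%:Z = Num.floor D by rewrite gez0_abs.
have hc : (Defs.card2 P A B <= (2 * absz (Num.floor D)).+1)%N.
  apply: (@count_int P A B h _ Hb) => a b a' b' Pab Pab'.
  rewrite hn floor_ge_int intr_norm intrB.
  exact: Hd Pab Pab'.
apply: (le_trans (y := ((2 * absz (Num.floor D)).+1)%:R)); first by rewrite ler_nat.
rewrite -addn1 natrD natrM.
have : (absz (Num.floor D))%:R <= D.
  by rewrite natr_absz ger0_norm // floor_le.
lra.
Qed.

Lemma jbr_pos (R : realType) (h : int) : 0 < jbr R h.
Proof. by rewrite /jbr sqrtr_gt0; have := sqr_ge0 (h%:~R : R); lra. Qed.

Lemma jbr_opp (R : realType) (h : int) : jbr R (- h) = jbr R h.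
Proof. by rewrite /jbr rmorphN sqrrN. Qed.

Lemma minR (R : realType) (a b : nat) : (minn a b)%:R = Num.min (a%:R : R) b%:R.
Proof.
by rewrite minEle ler_nat; case: leqP.
Qed.

Lemma pwE (R : realType) (al : R) (z : int) : pw al z = Fp al (z%:~R).
Proof. by rewrite /pw /Fp natr_absz intr_norm. Qed.

Lemma generic (R : realType) (al C0 sg c : R) (P : int -> int -> bool) (A B : nat) (h : int) :
  1 < al < 2 -> 0 < C0 -> `|sg| = 1 ->
  (forall a b : int, P a b -> [/\ b = a + h, h != 0, (`|a| <= A%:Z)%R, (`|b| <= B%:Z)%R &
      `|sg * (Fp al (b%:~R) - Fp al (a%:~R)) - c| <= C0]) ->
  (Defs.card2 P A B)%:R <= (2 * (64 * C0 / (al * (al - 1))) + 1) *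
      (Num.min (A%:R : R) (B%:R) `^ (2 - al) / jbr R h + 1).
Proof.
move=> hal C0p hsg HP.
move: (hal) => /andP[al1 al2].
set K := 64 * C0 / (al * (al - 1)).
have K0 : 0 <= K by rewrite /K; apply: divr_ge0; [lra|apply: mulr_ge0; lra].
set X := Num.min (A%:R : R) (B%:R) `^ (2 - al) / jbr R h.
have X0 : 0 <= X by rewrite /X divr_ge0 ?powR_ge0 // ltW // jbr_pos.
have D0 : 0 <= K * (X + 1) by apply: mulr_ge0; lra.
have Hb : forall a b : int, P a b -> b = a + h by move=> a b /HP [].
have Hd : forall a b a' b' : int, P a b -> P a' b' -> `|a'%:~R - a%:~R : R| <= K * (X + 1).
  move=> a b a' b' /HP [eb h0 aA bB ph] /HP [eb' _ aA' bB' ph'].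
  have castA : forall (z : int) (n : nat), (`|z| <= n%:Z)%R -> `|z%:~R : R| <= n%:R.
    by move=> z n hz; rewrite -intr_norm -[n%:R]/((n%:Z)%:~R) ler_int.
  apply: (@pair_bound R al C0 (a%:~R) (a'%:~R) (A%:R) (B%:R) h hal h0).
  + exact: castA.
  + exact: castA.
  + by rewrite -intrD -eb; apply: castA.
  + by rewrite -intrD -eb'; apply: castA.
  rewrite -!intrD -eb -eb'.
  set u := Fp al b'%:~R - Fp al a'%:~R. set v := Fp al b%:~R - Fp al a%:~R.
  have e : u - v = sg * ((sg * u - c) - (sg * v - c)).
    have ss : sg * sg = 1.
      by rewrite -expr2 -[LHS]ger0_norm ?sqr_ge0 // normrX hsg expr1n.
    have -> : sg * ((sg * u - c) - (sg * v - c)) = (sg * sg) * (u - v) by ring.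
    by rewrite ss mul1r.
  rewrite e normrM hsg mul1r.
  apply: (le_trans (ler_normB _ _)); lra.
have hc := @count_real R P A B h (K * (X + 1)) D0 Hb Hd.
apply: (le_trans hc).
have : 0 <= X by [].
nra.
Qed.

Lemma inS_E (R : realType) (alpha C0 m : R) (N N1 N2 N3 : nat) (k k1 k2 k3 : int) :
  inS alpha C0 m N N1 N2 N3 k k1 k2 k3 ->
  k = k1 - k2 + k3 /\ k2 != k1 /\ k2 != k3 /\
      `|Fp alpha k1%:~R - Fp alpha k2%:~R + Fp alpha k3%:~R - Fp alpha k%:~R - m| <= C0 /\
      (`|k| <= N%:Z)%R /\ (`|k1| <= N1%:Z)%R /\ (`|k2| <= N2%:Z)%R /\ (`|k3| <= N3%:Z)%R.
Proof.
rewrite /inS !pwE.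
by move=> /andP[/eqP e /andP[n1 /andP[n2 /andP[ph /andP[hk /andP[h1 /andP[h2 h3]]]]]]]; do !split.
Qed.

Theorem lemma2p5 (R : realType) (alpha C0 : R) :
  1 < alpha < 2 -> 0 < C0 ->
  exists C : R, 0 < C /\
  forall (N N1 N2 N3 : nat) (m : R),
    dyadic N -> dyadic N1 -> dyadic N2 -> dyadic N3 ->
    (1 <= N1 <= N)%N -> (1 <= N2 <= N)%N -> (1 <= N3 <= N)%N ->
    (forall k k1 : int,
       (card_S_kk1 alpha C0 m N N1 N2 N3 k k1)%:R
         <= C * (((minn N2 N3)%:R `^ (2 - alpha)) / jbr R (k1 - k) + 1)) /\
    (forall k k3 : int,
       (card_S_kk3 alpha C0 m N N1 N2 N3 k k3)%:R
         <= C * (((minn N1 N2)%:R `^ (2 - alpha)) / jbr R (k - k3) + 1)) /\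
    (forall k1 k2 : int,
       (card_S_k1k2 alpha C0 m N N1 N2 N3 k1 k2)%:R
         <= C * ((N3%:R `^ (2 - alpha)) / jbr R (k1 - k2) + 1)) /\
    (forall k2 k3 : int,
       (card_S_k2k3 alpha C0 m N N1 N2 N3 k2 k3)%:R
         <= C * ((N1%:R `^ (2 - alpha)) / jbr R (k2 - k3) + 1)).
Proof.
move=> hal C0p.
move: (hal) => /andP[al1 al2].
exists (2 * (64 * C0 / (alpha * (alpha - 1))) + 1); split.
  have : 0 <= 64 * C0 / (alpha * (alpha - 1)).
    by apply: divr_ge0; [lra|apply: mulr_ge0; lra].
  lra.
move=> N N1 N2 N3 m _ _ _ _ /andP[_ hN1] /andP[_ hN2] /andP[_ hN3].
split; [|split; [|split]].
- move=> k k1; rewrite /card_S_kk1 minR -jbr_opp opprB.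
  apply: (@generic R alpha C0 1 (m + Fp alpha k%:~R - Fp alpha k1%:~R)) => //.
    by rewrite normr1.
  move=> a b /inS_E [e [n1 [n2 [ph [hk [h1 [h2 h3]]]]]]].
  have eb : b = a + (k - k1) by rewrite e; ring.
  split => //.
  + apply/eqP => h0; move: n2; rewrite eb h0 addr0 eqxx //.
  + move: ph; congr (_ <= _); congr (`|_|); ring.
- move=> k k3; rewrite /card_S_kk3 minR -jbr_opp opprB.
  apply: (@generic R alpha C0 (-1) (m + Fp alpha k%:~R - Fp alpha k3%:~R)) => //.
    by rewrite normrN normr1.
  move=> a b /inS_E [e [n1 [n2 [ph [hk [h1 [h2 h3]]]]]]].
  have eb : b = a + (k3 - k) by rewrite e; ring.
  split => //.
  + apply/eqP => h0; move: n1; rewrite eb h0 addr0 eqxx //.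
  + move: ph; congr (_ <= _); congr (`|_|); ring.
- move=> k1 k2; rewrite /card_S_k1k2.
  have -> : (N3%:R : R) = Num.min (N%:R) (N3%:R) by rewrite -minR (minn_idPr hN3).
  rewrite -jbr_opp opprB.
  apply: (@generic R alpha C0 1 (m - Fp alpha k1%:~R + Fp alpha k2%:~R)) => //.
    by rewrite normr1.
  move=> a b /inS_E [e [n1 [n2 [ph [hk [h1 [h2 h3]]]]]]].
  have eb : b = a + (k2 - k1) by rewrite e; ring.
  split => //.
  + apply/eqP => h0; move: n1; rewrite (_ : k2 = k1) ?eqxx //; apply/eqP; rewrite -subr_eq0 h0 //.
  + move: ph; congr (_ <= _); congr (`|_|); ring.
- move=> k2 k3; rewrite /card_S_k2k3.
  have -> : (N1%:R : R) = Num.min (N%:R) (N1%:R) by rewrite -minR (minn_idPr hN1).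
  apply: (@generic R alpha C0 1 (m + Fp alpha k2%:~R - Fp alpha k3%:~R)) => //.
    by rewrite normr1.
  move=> a b /inS_E [e [n1 [n2 [ph [hk [h1 [h2 h3]]]]]]].
  have eb : b = a + (k2 - k3) by rewrite e; ring.
  split => //.
  + apply/eqP => h0; move: n2; rewrite (_ : k2 = k3) ?eqxx //; apply/eqP; rewrite -subr_eq0 h0 //.
  + move: ph; congr (_ <= _); congr (`|_|); ring.
Qed.
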